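(* Let $H$ be a connected chordal graph on vertex set $\{v_1,\dots,v_n\}$ and let $v_1\prec\cdots\prec v_n$ be a perfect elimination ordering of $H$. For every $i\geq2$ such that $v_i$ has an outgoing neighbour, let $\nu(v_i)$ be the last (with respect to $\prec$) outgoing neighbour of $v_i$. Then the graph $T_\prec(H)$ on $V(H)$ whose edges are all pairs $\{v_i,\nu(v_i)\}$ is a spanning tree of $H$. Moreover, any ordering of $V(H)$ in which vertices farther from $v_1$ in $T_\prec(H)$ come later is a perfect elimination ordering of $H$.
   Context: A graph is chordal if it contains no induced cycle of length at least 4. An ordering $v_1\prec\cdots\prec v_n$ of the vertices of a graph $H$ is a perfect elimination ordering if for every $i$ the set of outgoing neighbours of $v_i$, i.e. neighbours of $v_i$ among $v_1,\dots,v_{i-1}$, induces a clique in $H$. *)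

(* Defs.v *)
From mathcomp Require Import all_boot.
Set Implicit Arguments. Unset Strict Implicit. Unset Printing Implicit Defensive.

Definition simple_graph (T : finType) (e : rel T) : Prop :=
  symmetric e /\ irreflexive e.

Definition connected_graph (T : finType) (e : rel T) : Prop :=
  forall x y : T, connect e x y.

Definition is_cycle (T : finType) (e : rel T) (c : seq T) : Prop :=
  [/\ uniq c, 3 <= size c & cycle e c].

Definition is_induced_cycle (T : finType) (e : rel T) (c : seq T) : Prop :=
  [/\ is_cycle e c &
      forall x y, x \in c -> y \in c -> e x y -> y = next c x \/ y = prev c x].

Definition chordal (T : finType) (e : rel T) : Prop :=
  forall c : seq T, 4 <= size c -> ~ is_induced_cycle e c.

Definition acyclic (T : finType) (e : rel T) : Prop :=
  forall c : seq T, ~ is_cycle e c.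

(* A vertex ordering is given by an injective rank function r : T -> nat;
   u precedes v iff r u < r v. *)
Definition vertex_ordering (T : finType) (r : T -> nat) : Prop := injective r.

Definition outgoing (T : finType) (e : rel T) (r : T -> nat) (v u : T) : bool :=
  e v u && (r u < r v).

Definition clique (T : finType) (e : rel T) (A : pred T) : Prop :=
  forall x y, A x -> A y -> x != y -> e x y.

Definition perfect_elimination_ordering (T : finType) (e : rel T) (r : T -> nat)
  : Prop :=
  vertex_ordering r /\ forall v : T, clique e (outgoing e r v).

Definition last_outgoing (T : finType) (e : rel T) (r : T -> nat) (v u : T)
  : bool :=
  outgoing e r v u && [forall w, outgoing e r v w ==> (r w <= r u)].

Definition elim_tree (T : finType) (e : rel T) (r : T -> nat) : rel T :=
  fun x y => last_outgoing e r x y || last_outgoing e r y x.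

Definition spanning_tree (T : finType) (e t : rel T) : Prop :=
  [/\ simple_graph t, subrel t e, connected_graph t & acyclic t].

(* walk of length (number of edges) size p from x to y *)
Definition walk (T : finType) (e : rel T) (x y : T) (p : seq T) : Prop :=
  path e x p /\ last x p = y.

Definition is_dist (T : finType) (e : rel T) (x y : T) (k : nat) : Prop :=
  (exists p, walk e x y p /\ size p = k) /\
  (forall p, walk e x y p -> k <= size p).

(* Main.v *)
Require Import Defs.
From mathcomp Require Import all_boot.
From mathcomp Require Import zify.
Set Implicit Arguments. Unset Strict Implicit.
Set Default Proof Using "All".

Section S.
Variables (T : finType) (e : rel T) (r : T -> nat) (v1 : T).
Hypotheses (Hsym : symmetric e) (Hirr : irreflexive e)
  (Hconn : connected_graph e) (Hinj : injective r)
  (Hcl : forall v, clique e (outgoing e r v)) (Hmin : forall v, r v1 <= r v).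

Lemma rne x y : e x y -> r x != r y.
Proof. move=> exy; apply/eqP=> /Hinj exy'; by rewrite exy' Hirr in exy. Qed.

Lemma drop_max z : forall n p x, size p <= n -> path e x p -> r x < r z ->
  r (last x p) < r z -> all (fun w => r w <= r z) p ->
  exists q, [/\ path e x q, last x q = last x p & all (fun w => r w < r z) q].
Proof.
elim=> [|n IH] p x.
  case: p => //= _ _ _ _ _; by exists [::].
move=> sp px rx rl ap.
case: (boolP (z \in p)) => zp; last first.
  exists p; split=> //. apply/allP=> w wp.
  rewrite ltn_neqAle (allP ap w wp) andbT; apply/eqP => /Hinj ewz.
  by rewrite -ewz wp in zp.
case/splitPr: zp sp px rl ap => p1 p2.
rewrite size_cat /= cat_path /= last_cat /= all_cat /=.
move=> sp /and3P[p1p eaz p2p] rl /and3P[a1 _ a2].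
set a := last x p1 in eaz p2p rl *.
have raz : r a < r z.
  rewrite ltn_neqAle rne //.
  have : a \in x :: p1 by apply: mem_last.
  rewrite in_cons => /orP[/eqP->|ap1]; [exact: ltnW | exact: (allP a1)].
case: p2 p2p rl a2 sp => [|b p3] /=; first by rewrite ltnn.
move=> /andP[ezb p3p] rl /andP[rb a3] sp.
have rbz : r b < r z by rewrite ltn_neqAle eq_sym rne.
have oa : outgoing e r z a by rewrite /outgoing Hsym eaz raz.
have ob : outgoing e r z b by rewrite /outgoing ezb rbz.
case: (eqVneq a b) => [eab|nab].
  have s1 : size (p1 ++ p3) <= n.
  rewrite size_cat; move: sp; move: (size p1) (size p3) => u w; lia.
  have s2 : path e x (p1 ++ p3) by rewrite cat_path p1p /= -/a eab.
  have s3 : r (last x (p1 ++ p3)) < r z by rewrite last_cat -/a eab.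
  have s4 : all (fun w => r w <= r z) (p1 ++ p3) by rewrite all_cat a1.
  have [q [qp ql qa]] := IH _ _ s1 s2 rx s3 s4.
  by exists q; split=> //; rewrite ql last_cat -/a eab.
have eab : e a b by exact: (@Hcl z a b oa ob nab).
have s1 : size (p1 ++ b :: p3) <= n by rewrite size_cat /=; move: sp; move: (size p1) (size p3) => u w; lia.
have s2 : path e x (p1 ++ b :: p3) by rewrite cat_path p1p /= -/a eab.
have s3 : r (last x (p1 ++ b :: p3)) < r z by rewrite last_cat.
have s4 : all (fun w => r w <= r z) (p1 ++ b :: p3) by rewrite all_cat a1 /= a3 andbT.
have [q [qp ql qa]] := IH _ _ s1 s2 rx s3 s4.
by exists q; split=> //; rewrite ql last_cat.
Qed.

Lemma reduce n : forall p x, all (fun w => r w <= n) p -> path e x p ->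
  exists q, [/\ path e x q, last x q = last x p &
    all (fun w => r w <= maxn (r x) (r (last x p))) q].
Proof.
elim: n => [|n IH] p x ap px.
  exists p; split=> //; apply/allP=> w /(allP ap); rewrite leqn0 => /eqP->.
  done.
case: (leqP n.+1 (maxn (r x) (r (last x p)))) => hm.
  exists p; split=> //; apply/allP=> w /(allP ap) h; exact: leq_trans h hm.
case: (boolP (has (fun w => r w == n.+1) p)) => [/hasP[z zp /eqP rz]| nh].
  have [h1 h2] : r x < r z /\ r (last x p) < r z by lia.
  have ap' : all (fun w => r w <= r z) p by rewrite rz.
  have [q [qp ql qa]] := @drop_max z (size p) p x (leqnn _) px h1 h2 ap'.
  have aq : all (fun w => r w <= n) q by apply/allP=> w /(allP qa); rewrite rz.
  have [q0 [q0p q0l q0a]] := IH q x aq qp.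
  exists q0; split=> //; first by rewrite q0l ql. by rewrite -ql.
have ap' : all (fun w => r w <= n) p.
  apply/allP=> w wp; have := allP ap w wp; rewrite leq_eqVlt ltnS => /orP[/eqP rw|//].
  by move/hasPn: nh => /(_ w wp); rewrite rw eqxx.
exact: IH p x ap' px.
Qed.

Lemma out_exists {v} : v != v1 -> exists u, outgoing e r v u.
Proof.
move=> nv; have := Hconn v v1; case/connectP => p pp lp.
have ap : all (fun w => r w <= \max_(w : T) r w) p.
  by apply/allP=> w _; apply: leq_bigmax.
have [q [qp ql qa]] := reduce ap pp.
rewrite -lp in ql qa.
have hm : maxn (r v) (r v1) = r v by apply/maxn_idPl.
rewrite hm in qa.
case: q qp ql qa => [|u q] /=.
  by move=> _ h; rewrite h eqxx in nv.
move=> /andP[evu _] _ /andP[ru _]; exists u.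
by rewrite /outgoing evu ltn_neqAle ru andbT eq_sym rne.
Qed.

Lemma lo_exists {v} : v != v1 -> exists u, last_outgoing e r v u.
Proof.
move=> nv; have [u0 ou0] := out_exists nv.
case: (arg_maxnP r ou0) => w ow Hm.
exists w; rewrite /last_outgoing ow /=; apply/forallP=> w'; apply/implyP; exact: Hm.
Qed.

Lemma lo_uniq {v u u'} : last_outgoing e r v u -> last_outgoing e r v u' -> u = u'.
Proof.
move=> /andP[ou /forallP fu] /andP[ou' /forallP fu']; apply: Hinj; apply/eqP.
by rewrite eqn_leq (implyP (fu' u) ou) (implyP (fu u') ou').
Qed.

Lemma lo_lt {v u} : last_outgoing e r v u -> r u < r v.
Proof. by case/andP=> /andP[]. Qed.

Lemma lo_e {v u} : last_outgoing e r v u -> e v u.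
Proof. by case/andP=> /andP[]. Qed.

Lemma no_out_v1 u : outgoing e r v1 u = false.
Proof. by rewrite /outgoing; case: (e v1 u) => //=; rewrite ltnNge Hmin. Qed.

Lemma no_lo_v1 u : last_outgoing e r v1 u = false.
Proof. by rewrite /last_outgoing no_out_v1. Qed.

Inductive lev : T -> nat -> Prop :=
| lev0 : lev v1 0
| levS v u k : last_outgoing e r v u -> lev u k -> lev v k.+1.

Lemma lev_fun {v k k'} : lev v k -> lev v k' -> k = k'.
Proof.
move=> H; elim: H k' => [|x u k0 lo _ IH] k' H'.
  inversion H'; subst; last by rewrite no_lo_v1 in H.
  done.
inversion H'; subst.
  by rewrite no_lo_v1 in lo.
by rewrite (IH k1) // (lo_uniq lo H).
Qed.

Lemma lev_tot v : exists k, lev v k.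
Proof.
have: forall n v, r v <= n -> exists k, lev v k; last by apply; apply: leqnn.
elim=> [|n IH] w hw; case: (eqVneq w v1) => [->|nw]; try by exists 0; constructor.
  have [u lo] := lo_exists nw; have := lo_lt lo; by rewrite leqn0 in hw; rewrite (eqP hw).
have [u lo] := lo_exists nw.
have [k lk] := IH u (leq_trans (lo_lt lo) hw).
by exists k.+1; apply: levS lo lk.
Qed.

Let t := elim_tree e r.

Lemma t_lev {x y kx ky} : t x y -> lev x kx -> lev y ky -> ky <= kx.+1.
Proof.
case/orP=> lo lx ly.
  by rewrite (lev_fun lx (levS lo ly)) leqW.
by rewrite (lev_fun ly (levS lo lx)).
Qed.

Lemma walk_lb p : forall x kx, path t x p -> lev x kx ->
  forall ky, lev (last x p) ky -> ky <= kx + size p.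
Proof.
elim: p => [|z p IH] x kx /=.
  by move=> _ lx ky ly; rewrite (lev_fun ly lx) addn0.
move=> /andP[txz pz] lx ky ly.
have [kz lz] := lev_tot z.
have h1 := t_lev txz lx lz.
have h2 := IH z kz pz lz ky ly.
lia.
Qed.

Lemma walk_ex {v k} : lev v k -> exists p, [/\ path t v1 p, last v1 p = v & size p = k].
Proof.
elim=> [|x u k0 lo _ [p [pp lp sp]]]; first by exists [::].
exists (rcons p x); split.
- by rewrite rcons_path pp lp /t /elim_tree lo orbT.
- by rewrite last_rcons.
- by rewrite size_rcons sp.
Qed.

Lemma lev_dist {v k} : lev v k -> is_dist t v1 v k.
Proof.
move=> lv; split.
  by have [p [pp lp sp]] := walk_ex lv; exists p.
move=> p [pp lp]; rewrite -lp in lv; exact: (walk_lb pp lev0 lv).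
Qed.

Lemma dist_lev {v k} : is_dist t v1 v k -> lev v k.
Proof.
move=> [[p [[pp lp] sp]] Hm].
have [k' lk] := lev_tot v.
have [p' [pp' lp' sp']] := walk_ex lk.
have h1 := Hm p' (conj pp' lp').
rewrite -lp in lk; have h2 := walk_lb pp lev0 lk.
have -> : k = k' by lia.
by rewrite -lp.
Qed.

Lemma key {n} : forall {v u ku kv}, r v <= n -> outgoing e r v u -> lev u ku -> lev v kv -> ku < kv.
Proof.
elim: n => [|n IH] v u ku kv hv ou lu lv.
  by move: ou; rewrite /outgoing => /andP[_]; rewrite ltnNge (leq_trans hv).
inversion lv; subst.
  by rewrite no_out_v1 in ou.
rename u0 into w.
have rwv := lo_lt H.
case: (eqVneq u w) => [euw|nuw].
  by rewrite euw in lu; rewrite (lev_fun lu H0).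
have ow : outgoing e r v w by case/andP: H.
have euw : e u w by exact: (@Hcl v u w ou ow nuw).
have ruw : r u <= r w by case/andP: H => _ /forallP /(_ u) /implyP; apply.
have ow' : outgoing e r w u by rewrite /outgoing Hsym euw ltn_neqAle ruw andbT rne.
have := IH w u ku k (leq_trans rwv hv) ow' lu H0.
by move=> h; apply: leq_trans h _.
Qed.

End S.

Theorem mainTheorem6 (T : finType) (e : rel T) (r : T -> nat) (v1 : T) :
  simple_graph e -> connected_graph e -> chordal e ->
  perfect_elimination_ordering e r ->
  (forall v, r v1 <= r v) ->
  spanning_tree e (elim_tree e r) /\
  (forall r' : T -> nat, vertex_ordering r' ->
     (forall x y kx ky, is_dist (elim_tree e r) v1 x kx ->
        is_dist (elim_tree e r) v1 y ky -> kx < ky -> r' x < r' y) ->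
     perfect_elimination_ordering e r').
Proof.
move=> [Hsym Hirr] Hconn _ [Hinj Hcl] Hmin.
have tsym : symmetric (elim_tree e r) by move=> x y; rewrite /elim_tree orbC.
have tlev := lev_tot Hsym Hirr Hconn Hinj Hcl Hmin.
have lo_e' := lo_e Hsym Hirr Hconn Hinj Hcl Hmin.
have lo_lt' := lo_lt Hsym Hirr Hconn Hinj Hcl Hmin.
have lo_uniq' := lo_uniq Hsym Hirr Hconn Hinj Hcl Hmin.
have walk_ex' := walk_ex Hsym Hirr Hconn Hinj Hcl Hmin.
have lev_dist' := lev_dist Hsym Hirr Hconn Hinj Hcl Hmin.
have key' := key Hsym Hirr Hconn Hinj Hcl Hmin.
split.
  split.
  - split=> // x; rewrite /elim_tree /last_outgoing /outgoing. by rewrite ltnn !andbF.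
  - move=> x y /orP[/lo_e' //|/lo_e']; by rewrite Hsym.
  - have c1 : forall y, connect (elim_tree e r) v1 y.
      move=> y; have [k lk] := tlev y.
      have [p [pp lp _]] := walk_ex' _ _ lk.
      by apply/connectP; exists p.
    move=> x y; apply: (connect_trans _ (c1 y)).
    by rewrite (sym_connect_sym tsym).
  move=> c [uc sc cc].
  case: c uc sc cc => [//|c0 c'] uc sc cc.
  set c := c0 :: c' in uc sc cc.
  have c0c : c0 \in c by rewrite mem_head.
  case: (arg_maxnP r (P := fun w => w \in c) c0c) => x xc Hm.
  case: (rot_to xc) => i s hrot.
  have us : uniq (x :: s) by rewrite -hrot rot_uniq.
  have ss : 3 <= size (x :: s) by rewrite -hrot size_rot.
  have cs : cycle (elim_tree e r) (x :: s) by rewrite -hrot rot_cycle.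
  have ms : forall w, w \in x :: s -> r w <= r x.
    by move=> w; rewrite -hrot mem_rot => /Hm.
  clear hrot; case: s us ss cs ms => [|a [|d s3]] //= us _ cs ms.
  move: cs; rewrite rcons_path /= => /and4P[txa _ _ tbx].
  set b := last d s3 in tbx.
  have bm : b \in d :: s3 by apply: mem_last.
  have hlo : forall y, y \in x :: a :: d :: s3 -> elim_tree e r x y -> last_outgoing e r x y.
    move=> y yin /orP[//|lo]; have := lo_lt' _ _ lo; have := ms y yin; move=> h1 h2; by move: (leq_ltn_trans h1 h2); rewrite ltnn.
  have ain : a \in x :: a :: d :: s3 by rewrite !in_cons eqxx orbT.
  have bin : b \in x :: a :: d :: s3 by rewrite in_cons in_cons -/(b \in _) bm !orbT.
  have txb : elim_tree e r x b by rewrite tsym.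
  have la := hlo a ain txa.
  have lb := hlo b bin txb.
  have eab := lo_uniq' _ _ _ la lb.
  have nad : a \notin d :: s3 by move: us => /= /andP[_ /andP[]].
  by move: nad; rewrite eab bm.
move=> r' Hinj' Hr'; split=> // x y z oy oz nyz.
have toout : forall w, outgoing e r' x w -> outgoing e r x w.
  move=> w /andP[exw rw]; rewrite /outgoing exw /=.
  case: (ltngtP (r w) (r x)) => // h.
    have ow : outgoing e r w x by rewrite /outgoing Hsym exw h.
    have [kx lx] := tlev x; have [kw lw] := tlev w.
    have hk := key' _ _ _ _ _ (leqnn _) ow lx lw.
    have h2 := Hr' _ _ _ _ (lev_dist' _ _ lx) (lev_dist' _ _ lw) hk.
    by move: (ltn_trans h2 rw); rewrite ltnn.
  by move/Hinj: h => h; rewrite h Hirr in exw.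
exact: (Hcl x y z (toout _ oy) (toout _ oz) nyz).
Qed.
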